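(* Let $G_1,G_2$ be multiplicative Lie algebras and $\mu:G_1\to G_2$ a multiplicative Lie algebra homomorphism such that $\ker\mu\cap{}^M[G_1,G_1]=1$ and $\mu(G_1)\,\mathcal Z(G_2)=G_2$. Then the map $\nu:G_1/\mathcal Z(G_1)\to G_2/\mathcal Z(G_2)$, $\nu(g\mathcal Z(G_1))=\mu(g)\mathcal Z(G_2)$, together with $\mu|_{{}^M[G_1,G_1]}$, forms an isoclinism $(\nu,\mu|_{{}^M[G_1,G_1]})$ between $G_1$ and $G_2$.
   Context: A multiplicative Lie algebra is a group $(G,\cdot)$ with a binary operation $\star$ such that for all $x,y,z\in G$: $x\star x=1$; $x\star(yz)=(x\star y)\,{}^y(x\star z)$; $(xy)\star z={}^x(y\star z)(x\star z)$; $((x\star y)\star{}^yz)((y\star z)\star{}^zx)((z\star x)\star{}^xy)=1$; ${}^z(x\star y)={}^zx\star{}^zy$, where ${}^xy=xyx^{-1}$. Homomorphisms preserve both operations. $Z(G)$ is the group center, $LZ(G)=\{x: x\star y=1\ \forall y\}$, $\mathcal Z(G)=LZ(G)\cap Z(G)$; $[x,y]$ is the group commutator; ${}^M[G,G]=(G\star G)[G,G]$ with $G\star G$ the ideal generated by all $a\star b$. $G_1,G_2$ are isoclinic via $(\nu,\mu')$ if $\nu:G_1/\mathcal Z(G_1)\to G_2/\mathcal Z(G_2)$ and $\mu':{}^M[G_1,G_1]\to{}^M[G_2,G_2]$ are multiplicative Lie algebra isomorphisms with $\mu'([g,g'])=[h,h']$ and $\mu'(g\star g')=h\star h'$ whenever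 $\nu(g\mathcal Z(G_1))=h\mathcal Z(G_2)$ and $\nu(g'\mathcal Z(G_1))=h'\mathcal Z(G_2)$. *)

(* Defs.v *)
Record MLA := {
  carrier :> Type;
  mul : carrier -> carrier -> carrier;
  inv : carrier -> carrier;
  one : carrier;
  star : carrier -> carrier -> carrier;
  mulA : forall x y z, mul x (mul y z) = mul (mul x y) z;
  mul1x : forall x, mul one x = x;
  mulx1 : forall x, mul x one = x;
  mulVx : forall x, mul (inv x) x = one;
  mulxV : forall x, mul x (inv x) = one;
  (* multiplicative Lie algebra axioms, with  ^x y = x y x^-1 *)
  star_xx : forall x, star x x = one;
  star_xM : forall x y z,
    star x (mul y z) = mul (star x y) (mul (mul y (star x z)) (inv y));
  star_Mx : forall x y z,
    star (mul x y) z = mul (mul (mul x (star y z)) (inv x)) (star x z);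
  star_jacobi : forall x y z,
    mul (mul (star (star x y) (mul (mul y z) (inv y)))
             (star (star y z) (mul (mul z x) (inv z))))
        (star (star z x) (mul (mul x y) (inv x))) = one;
  star_conj : forall x y z,
    mul (mul z (star x y)) (inv z) =
    star (mul (mul z x) (inv z)) (mul (mul z y) (inv z))
}.

Arguments mul {G} : rename.
Arguments inv {G} : rename.
Arguments one {G} : rename.
Arguments star {G} : rename.

Section Defs.
Variable G : MLA.

Definition comm (x y : G) : G := mul (mul (mul x y) (inv x)) (inv y).

(* group center Z(G), LZ(G), and  \mathcal Z(G) = LZ(G) ∩ Z(G) *)
Definition center (x : G) : Prop := forall y : G, mul x y = mul y x.
Definition lie_center (x : G) : Prop := forall y : G, star x y = one.
Definition mcenter (x : G) : Prop := lie_center x /\ center x.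

Definition is_subgroup (H : G -> Prop) : Prop :=
  H one /\ (forall x y, H x -> H y -> H (mul x y)) /\ (forall x, H x -> H (inv x)).

Definition is_ideal (I : G -> Prop) : Prop :=
  is_subgroup I /\
  (forall x y, I x -> I (mul (mul y x) (inv y))) /\
  (forall x y, I x -> I (star x y)).

Definition star_ideal (x : G) : Prop :=
  forall I, is_ideal I -> (forall a b, I (star a b)) -> I x.

Definition comm_subgroup (x : G) : Prop :=
  forall H, is_subgroup H -> (forall a b, H (comm a b)) -> H x.

(* ^M[G,G] = (G ⋆ G)[G,G] *)
Definition Mcomm (x : G) : Prop :=
  exists a b, star_ideal a /\ comm_subgroup b /\ x = mul a b.

Definition zcong (x y : G) : Prop := mcenter (mul (inv y) x).

End Defs.

Definition is_MLA_hom (G1 G2 : MLA) (f : G1 -> G2) : Prop :=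
  (forall x y, f (mul x y) = mul (f x) (f y)) /\
  (forall x y, f (star x y) = star (f x) (f y)).

(* A multiplicative Lie algebra isomorphism
     G1/\mathcal Z(G1) -> G2/\mathcal Z(G2),
   presented through a map on representatives  nu : G1 -> G2  with
   nu (g \mathcal Z(G1)) = (nu g) \mathcal Z(G2).  (Setoid encoding of the
   quotients: elements of G/\mathcal Z(G) are represented by elements of G,
   equality is zcong; the operations on the quotient are induced.) *)
Definition quot_iso (G1 G2 : MLA) (nu : G1 -> G2) : Prop :=
  (forall x y : G1, zcong G1 x y -> zcong G2 (nu x) (nu y)) /\
  (forall x y : G1, zcong G2 (nu (mul x y)) (mul (nu x) (nu y))) /\
  (forall x y : G1, zcong G2 (nu (star x y)) (star (nu x) (nu y))) /\
  (forall x y : G1, zcong G2 (nu x) (nu y) -> zcong G1 x y) /\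
  (forall h : G2, exists g : G1, zcong G2 (nu g) h).

(* A multiplicative Lie algebra isomorphism ^M[G1,G1] -> ^M[G2,G2], given
   as a map mu' : G1 -> G2 considered on the subset ^M[G1,G1]. *)
Definition Mcomm_iso (G1 G2 : MLA) (mu' : G1 -> G2) : Prop :=
  (forall x, Mcomm G1 x -> Mcomm G2 (mu' x)) /\
  (forall x y, Mcomm G1 x -> Mcomm G1 y -> mu' (mul x y) = mul (mu' x) (mu' y)) /\
  (forall x y, Mcomm G1 x -> Mcomm G1 y -> mu' (star x y) = star (mu' x) (mu' y)) /\
  (forall x y, Mcomm G1 x -> Mcomm G1 y -> mu' x = mu' y -> x = y) /\
  (forall h, Mcomm G2 h -> exists g, Mcomm G1 g /\ mu' g = h).

Definition isoclinic_via (G1 G2 : MLA) (nu : G1 -> G2) (mu' : G1 -> G2) : Prop :=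
  quot_iso G1 G2 nu /\ Mcomm_iso G1 G2 mu' /\
  (forall (g g' : G1) (h h' : G2),
     zcong G2 (nu g) h -> zcong G2 (nu g') h' ->
     mu' (comm G1 g g') = comm G2 h h' /\ mu' (star g g') = star h h').

(* Main.v *)
Require Import Defs.

Section Grp.
Variable G : MLA.
Implicit Types x y z a b w : G.

Lemma mulKl x y : mul (inv x) (mul x y) = y.
Proof. rewrite mulA, mulVx, mul1x. reflexivity. Qed.
Lemma mulKr x y : mul x (mul (inv x) y) = y.
Proof. rewrite mulA, mulxV, mul1x. reflexivity. Qed.
Lemma mulVKr x y : mul (mul y x) (inv x) = y.
Proof. rewrite <- mulA, mulxV, mulx1. reflexivity. Qed.
Lemma mulKVr x y : mul (mul y (inv x)) x = y.
Proof. rewrite <- mulA, mulVx, mulx1. reflexivity. Qed.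
Lemma cancel_l x y z : mul x y = mul x z -> y = z.
Proof. intro H. rewrite <- (mulKl x y), H, mulKl. reflexivity. Qed.
Lemma inv_uniq x y : mul x y = one -> inv x = y.
Proof. intro H. apply (cancel_l x). rewrite H, mulxV. reflexivity. Qed.
Lemma inv_inv x : inv (inv x) = x.
Proof. apply inv_uniq. apply mulVx. Qed.
Lemma inv_one : inv (@one G) = one.
Proof. apply inv_uniq. apply mul1x. Qed.
Lemma inv_mul x y : inv (mul x y) = mul (inv y) (inv x).
Proof. apply inv_uniq. rewrite <- mulA, mulKr, mulxV. reflexivity. Qed.
Lemma idem x : mul x x = x -> x = one.
Proof. intro H. apply (cancel_l x). rewrite mulx1. exact H. Qed.
Lemma div1 a b : mul a (inv b) = one -> a = b.
Proof. intro H. rewrite <- (mulKVr b a), H, mul1x. reflexivity. Qed.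

Lemma star_1x y : star (@one G) y = one.
Proof.
  apply idem. pose proof (star_Mx G one one y) as H.
  rewrite mul1x, mul1x, inv_one, mulx1 in H. symmetry; exact H.
Qed.
Lemma star_x1 x : star x (@one G) = one.
Proof.
  apply idem. pose proof (star_xM G x one one) as H.
  rewrite mul1x, mul1x, inv_one, mulx1 in H. symmetry; exact H.
Qed.

Lemma conj_mul x a b :
  mul (mul x (mul a b)) (inv x) = mul (mul (mul x a) (inv x)) (mul (mul x b) (inv x)).
Proof.
  rewrite <- !mulA, mulKl. reflexivity.
Qed.

Lemma conj1 x a : mul (mul x a) (inv x) = one -> a = one.
Proof.
  intro H. rewrite <- (mulKl x a). rewrite <- (mulKVr x (mul x a)). rewrite H.
  rewrite mul1x, mulVx. reflexivity.
Qed.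

Lemma star_anti x y : star x y = inv (star y x).
Proof.
  symmetry. apply inv_uniq. apply (conj1 x).
  rewrite conj_mul.
  pose proof (star_xx G (mul x y)) as H.
  rewrite star_Mx, (star_xM G y x y), (star_xM G x x y), star_xx, star_xx, mul1x, mulx1,
    mulxV, mulx1 in H. exact H.
Qed.

Lemma star_xz x z : lie_center G z -> star x z = one.
Proof. intro H. rewrite star_anti, H, inv_one. reflexivity. Qed.

Lemma star_Mz x z y : mcenter G z -> star (mul x z) y = star x y.
Proof.
  intros [H _]. rewrite star_Mx, H, mulx1, mulxV, mul1x. reflexivity.
Qed.
Lemma star_xMz x y z : mcenter G z -> star x (mul y z) = star x y.
Proof.
  intros [H _]. rewrite star_xM, (star_xz x z H), mulx1, mulxV, mulx1. reflexivity.
Qed.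

Lemma conjc w z x : center G z ->
  mul (mul (mul w z) x) (inv (mul w z)) = mul (mul w x) (inv w).
Proof.
  intro Hz. rewrite inv_mul. rewrite <- (mulA _ w z x), (Hz x), (mulA _ w x z).
  rewrite <- mulA, mulKr. reflexivity.
Qed.

Lemma comm_Mz x z y : center G z -> comm G (mul x z) y = comm G x y.
Proof. intro Hz. unfold comm. rewrite conjc by exact Hz. reflexivity. Qed.

Lemma comm_xMz x y z : center G z -> comm G x (mul y z) = comm G x y.
Proof.
  intro Hz. unfold comm. rewrite inv_mul.
  rewrite (mulA _ x y z), <- (mulA _ (mul x y) z (inv x)), (Hz (inv x)), mulA.
  rewrite (mulA _ (mul x y) (inv x) z), mulVKr. reflexivity. Qed.

Lemma comm_z1 w y : center G w -> comm G w y = one.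
Proof. intro H. unfold comm. rewrite H, mulVKr, mulxV. reflexivity. Qed.

Lemma comm1_center w y : comm G w y = one -> mul w y = mul y w.
Proof.
  intro H. unfold comm in H. apply div1 in H.
  rewrite <- (mulKVr w (mul w y)), H. reflexivity.
Qed.

Lemma mcenter_one : mcenter G one.
Proof. split. intro y. apply star_1x. intro y. rewrite mul1x, mulx1. reflexivity. Qed.

Lemma mcenter_inv z : mcenter G z -> mcenter G (inv z).
Proof.
  intros [Hl Hc]. split.
  - intro y. pose proof (star_Mx G (inv z) z y) as H.
    rewrite mulVx, star_1x, Hl, mulx1, mulxV, mul1x in H. symmetry; exact H.
  - intro y. apply (cancel_l z). rewrite mulKr, mulA, Hc, mulVKr. reflexivity.
Qed.

Lemma star_ideal_ideal : is_ideal G (star_ideal G).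
Proof.
  unfold star_ideal. repeat split.
  - intros I [[H1 _] _] _. exact H1.
  - intros x y Hx Hy I HI Hs. assert (HI0 := HI). destruct HI0 as [[_ [HM _]] _]. apply HM; [apply Hx|apply Hy]; assumption.
  - intros x Hx I HI Hs. assert (HI0 := HI). destruct HI0 as [[_ [_ HV]] _]. apply HV; apply Hx; assumption.
  - intros x y Hx I HI Hs. assert (HI0 := HI). destruct HI0 as [_ [HN _]]. apply HN; apply Hx; assumption.
  - intros x y Hx I HI Hs. assert (HI0 := HI). destruct HI0 as [_ [_ HS]]. apply HS; apply Hx; assumption.
Qed.
Lemma star_ideal_star a b : star_ideal G (star a b).
Proof. intros I _ H. apply H. Qed.

Lemma comm_subgroup_sub : is_subgroup G (comm_subgroup G).
Proof.
  unfold comm_subgroup. repeat split.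
  - intros H [H1 _] _. exact H1.
  - intros x y Hx Hy H HH Hc. assert (HH0 := HH). destruct HH0 as [_ [HM _]]. apply HM; [apply Hx|apply Hy]; assumption.
  - intros x Hx H HH Hc. assert (HH0 := HH). destruct HH0 as [_ [_ HV]]. apply HV; apply Hx; assumption.
Qed.

Lemma Mcomm_star a b : Mcomm G (star a b).
Proof.
  exists (star a b), one. split. apply star_ideal_star. split.
  apply comm_subgroup_sub. rewrite mulx1. reflexivity.
Qed.
Lemma Mcomm_comm a b : Mcomm G (comm G a b).
Proof.
  exists one, (comm G a b). split. apply star_ideal_ideal. split.
  intros H _ Hc. apply Hc. rewrite mul1x. reflexivity.
Qed.

Lemma Mcomm_div x y : Mcomm G x -> Mcomm G y -> Mcomm G (mul (inv y) x).
Proof.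
  intros [a' [b' [Ha' [Hb' ->]]]] [a [b [Ha [Hb ->]]]].
  destruct star_ideal_ideal as [[_ [SM SV]] [SN _]].
  destruct comm_subgroup_sub as [_ [CM CV]].
  exists (mul (mul (inv b) (mul (inv a) a')) (inv (inv b))), (mul (inv b) b').
  split. apply SN. apply SM; auto.
  split. apply CM; auto.
  rewrite inv_inv, inv_mul, <- (mulA _ _ b (mul (inv b) b')), mulKr, !mulA. reflexivity.
Qed.

End Grp.

Section Hom.
Variables (G1 G2 : MLA) (mu : G1 -> G2).
Hypothesis Hmu : is_MLA_hom G1 G2 mu.

Lemma mu_mul x y : mu (mul x y) = mul (mu x) (mu y).
Proof. apply (proj1 Hmu). Qed.
Lemma mu_star x y : mu (star x y) = star (mu x) (mu y).
Proof. apply (proj2 Hmu). Qed.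
Lemma mu_one : mu one = one.
Proof. apply idem. rewrite <- mu_mul, mul1x. reflexivity. Qed.
Lemma mu_inv x : mu (inv x) = inv (mu x).
Proof. symmetry. apply inv_uniq. rewrite <- mu_mul, mulxV. apply mu_one. Qed.
Lemma mu_comm x y : mu (comm G1 x y) = comm G2 (mu x) (mu y).
Proof. unfold comm. rewrite !mu_mul, !mu_inv. reflexivity. Qed.

Lemma mu_star_ideal a : star_ideal G1 a -> star_ideal G2 (mu a).
Proof.
  intros Ha I [[H1 [HM HV]] [HN HS]] Hst.
  apply (Ha (fun x => I (mu x))).
  - repeat split.
    + rewrite mu_one. exact H1.
    + intros x y Hx Hy. rewrite mu_mul. auto.
    + intros x Hx. rewrite mu_inv. auto.
    + intros x y Hx. rewrite !mu_mul, mu_inv. auto.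
    + intros x y Hx. rewrite mu_star. auto.
  - intros x y. rewrite mu_star. auto.
Qed.

Lemma mu_comm_subgroup a : comm_subgroup G1 a -> comm_subgroup G2 (mu a).
Proof.
  intros Ha H [H1 [HM HV]] Hc.
  apply (Ha (fun x => H (mu x))).
  - repeat split.
    + rewrite mu_one. exact H1.
    + intros x y Hx Hy. rewrite mu_mul. auto.
    + intros x Hx. rewrite mu_inv. auto.
  - intros x y. rewrite mu_comm. auto.
Qed.

Lemma mu_Mcomm x : Mcomm G1 x -> Mcomm G2 (mu x).
Proof.
  intros [a [b [Ha [Hb ->]]]]. exists (mu a), (mu b).
  split. apply mu_star_ideal; auto. split. apply mu_comm_subgroup; auto.
  apply mu_mul.
Qed.

Hypothesis Hsurj : forall h : G2, exists (g : G1) (z : G2), mcenter G2 z /\ h = mul (mu g) z.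

Lemma mu_mcenter w : mcenter G1 w -> mcenter G2 (mu w).
Proof.
  intros [Hl Hc]. split.
  - intro h. destruct (Hsurj h) as [g [z [Hz ->]]].
    rewrite star_xMz by exact Hz. rewrite <- mu_star, Hl. apply mu_one.
  - intro h. destruct (Hsurj h) as [g [z [Hz ->]]].
    rewrite mulA, <- mu_mul, Hc, mu_mul, <- !mulA. f_equal.
    symmetry. apply (proj2 Hz).
Qed.

End Hom.

Theorem corollary4p9 (G1 G2 : MLA) (mu : G1 -> G2) :
  is_MLA_hom G1 G2 mu ->
  (* ker mu ∩ ^M[G1,G1] = 1 *)
  (forall x : G1, Mcomm G1 x -> mu x = one -> x = one) ->
  (* mu(G1) \mathcal Z(G2) = G2 *)
  (forall h : G2, exists (g : G1) (z : G2), mcenter G2 z /\ h = mul (mu g) z) ->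
  (* nu(g \mathcal Z(G1)) = mu(g) \mathcal Z(G2), and mu restricted to ^M[G1,G1] *)
  isoclinic_via G1 G2 mu mu.
Proof.
  intros Hmu Hker Hsurj.
  assert (Hz : forall g h, zcong G2 (mu g) h -> mu g = mul h (mul (inv h) (mu g))).
  { intros. rewrite mulKr. reflexivity. }
  split; [|split].
  -
    unfold quot_iso, zcong. split; [|split; [|split; [|split]]].
    + intros x0 y0 H. rewrite <- (mu_inv _ _ _ Hmu), <- (mu_mul _ _ _ Hmu).
      apply (mu_mcenter _ _ _ Hmu Hsurj). exact H.
    + intros x y. rewrite (mu_mul _ _ _ Hmu), mulVx. apply mcenter_one.
    + intros x y. rewrite (mu_star _ _ _ Hmu), mulVx. apply mcenter_one.
    + intros x y H. rewrite <- (mu_inv _ _ _ Hmu), <- (mu_mul _ _ _ Hmu) in H.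
      set (w := mul (inv y) x) in *. destruct H as [Hl Hc]. split.
      * intro g. apply Hker. apply Mcomm_star.
        rewrite (mu_star _ _ _ Hmu). apply Hl.
      * intro g. apply comm1_center. apply Hker. apply Mcomm_comm.
        rewrite (mu_comm _ _ _ Hmu). apply comm_z1. exact Hc.
    + intro h. destruct (Hsurj h) as [g [z [Hzc ->]]]. exists g.
      rewrite inv_mul, <- mulA, mulVx, mulx1. apply mcenter_inv. exact Hzc.
  -
    unfold Mcomm_iso. repeat split.
    + apply (mu_Mcomm _ _ _ Hmu).
    + intros. apply (mu_mul _ _ _ Hmu).
    + intros. apply (mu_star _ _ _ Hmu).
    + intros x y Hx Hy Hxy.
      assert (E : mul (inv y) x = one).
      { apply Hker. apply Mcomm_div; auto.
        rewrite (mu_mul _ _ _ Hmu), (mu_inv _ _ _ Hmu), Hxy, mulVx. reflexivity. }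
      rewrite <- (mulKr _ y x), E, mulx1. reflexivity.
    + intros h [a [b [Ha [Hb ->]]]].
      set (S := fun h : G2 => exists g, star_ideal G1 g /\ mu g = h).
      set (T := fun h : G2 => exists g, comm_subgroup G1 g /\ mu g = h).
      destruct (star_ideal_ideal G1) as [[S1 [SM SV]] [SN SS]].
      destruct (comm_subgroup_sub G1) as [C1 [CM CV]].
      assert (HS : S a).
      { apply Ha.
        - repeat split.
          + exists one. split; [exact S1 | apply (mu_one _ _ _ Hmu)].
          + intros x y [g1 [H1 <-]] [g2 [H2 <-]]. exists (mul g1 g2).
            split; auto. apply (mu_mul _ _ _ Hmu).
          + intros x [g1 [H1 <-]]. exists (inv g1).
            split; auto. apply (mu_inv _ _ _ Hmu).
          + intros x y [g1 [H1 <-]]. destruct (Hsurj y) as [g [z [Hzc ->]]].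
            exists (mul (mul g g1) (inv g)). split; auto.
            rewrite conjc by apply Hzc.
            rewrite !(mu_mul _ _ _ Hmu), (mu_inv _ _ _ Hmu). reflexivity.
          + intros x y [g1 [H1 <-]]. destruct (Hsurj y) as [g [z [Hzc ->]]].
            exists (star g1 g). split; auto.
            rewrite star_xMz by exact Hzc. apply (mu_star _ _ _ Hmu).
        - intros x y. destruct (Hsurj x) as [g [z [Hzc ->]]].
          destruct (Hsurj y) as [g' [z' [Hzc' ->]]].
          exists (star g g'). split. apply star_ideal_star.
          rewrite star_Mz by exact Hzc. rewrite star_xMz by exact Hzc'.
          apply (mu_star _ _ _ Hmu). }
      assert (HT : T b).
      { apply Hb.
        - repeat split.
          + exists one. split; [exact C1 | apply (mu_one _ _ _ Hmu)].
          + intros x y [g1 [H1 <-]] [g2 [H2 <-]]. exists (mul g1 g2).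
            split; auto. apply (mu_mul _ _ _ Hmu).
          + intros x [g1 [H1 <-]]. exists (inv g1).
            split; auto. apply (mu_inv _ _ _ Hmu).
        - intros x y. destruct (Hsurj x) as [g [z [Hzc ->]]].
          destruct (Hsurj y) as [g' [z' [Hzc' ->]]].
          exists (comm G1 g g'). split. intros H _ Hc. apply Hc.
          rewrite comm_Mz by apply Hzc. rewrite comm_xMz by apply Hzc'.
          apply (mu_comm _ _ _ Hmu). }
      destruct HS as [a' [Ha' <-]]. destruct HT as [b' [Hb' <-]].
      exists (mul a' b'). split.
      * exists a', b'. auto.
      * apply (mu_mul _ _ _ Hmu).
  - intros g g' h h' H H'.
    pose proof (Hz _ _ H) as E. pose proof (Hz _ _ H') as E'.
    unfold zcong in H, H'.
    split.
    + rewrite (mu_comm _ _ _ Hmu), E, E'.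
      rewrite comm_Mz by apply H. rewrite comm_xMz by apply H'. reflexivity.
    + rewrite (mu_star _ _ _ Hmu), E, E'.
      rewrite star_Mz by exact H. rewrite star_xMz by exact H'. reflexivity.
Qed.
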